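(* Let $(G,D,\star)$ be a probabilistic metric space (not necessarily complete) where $\star$ is a continuous triangle function, and let $(a_n)\subset G$ be a Cauchy sequence. Then there exists a probabilistic $1$-Lipschitz map $f:G\to\Delta^+$ such that $D(a_n,x)\xrightarrow{w}f(x)$ as $n\to\infty$ for every $x\in G$. In particular $f(a_n)\xrightarrow{w}\mathcal H_0$ as $n\to\infty$.
   Context: A distribution function is a nondecreasing, left-continuous function $F:[-\infty,+\infty]\to[0,1]$ with $F(-\infty)=0$, $F(+\infty)=1$; $\Delta^+$ is the set of distribution functions with $F(0)=0$, ordered pointwise. $\mathcal H_0(t)=0$ for $t\le0$, $1$ for $t>0$. A triangle function is a binary operation $\star$ on $\Delta^+$ that is commutative, associative, nondecreasing in each argument, with $F\star\mathcal H_0=F$. $F_n\xrightarrow{w}F$ (weak convergence) means $F_n(t)\to F(t)$ at every continuity point $t\in\mathbb R$ of $F$; $\star$ is continuous if $F_n\star L_n\xrightarrow{w}F\star L$ whenever $F_n\xrightarrow{w}F$, $L_n\xrightarrow{w}L$. A probabilistic metric space $(G,D,\star)$ consists of a set $G$, a triangle function $\star$ and $D:G\times G\to\Delta^+$ with (i) $D(p,q)=\mathcal H_0$ iff $p=q$; (ii) $D(p,q)=D(q,p)$; (iii) $D(p,q)\star D(q,r)\le D(p,r)$. A sequence $(z_n)\subset G$ is Cauchy if $D(z_n,z_p)(t)\to\mathcal H_0(t)$ for all $t\in\mathbb R$ as $n,p\to\infty$. A map $f:G\to\Delta^+$ is probabilistic $1$-Lipschitz if $D(x,y)\star f(y)\le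 f(x)$ for all $x,y$. *)

(* Defs.v *)
From Stdlib Require Import Reals.
Open Scope R_scope.

(* A distribution function F : [-oo,+oo] -> [0,1] with F(-oo)=0, F(+oo)=1 is
   determined by its restriction to R (the values at -oo/+oo are fixed by
   definition), so we represent it as a function R -> R. *)
Definition dfun := R -> R.

Definition nondecreasing (F : dfun) : Prop := forall s t, s <= t -> F s <= F t.

Definition left_continuous (F : dfun) : Prop :=
  forall t eps, 0 < eps -> exists delta, 0 < delta /\
    forall s, t - delta < s < t -> Rabs (F s - F t) < eps.

Definition in_Delta_plus (F : dfun) : Prop :=
  nondecreasing F /\ left_continuous F /\ (forall t, 0 <= F t <= 1) /\ F 0 = 0.

(* pointwise order (at -oo/+oo all distribution functions agree) *)
Definition dle (F L : dfun) : Prop := forall t, F t <= L t.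

Definition H0 : dfun := fun t => if Rle_dec t 0 then 0 else 1.

Definition triangle_function (T : dfun -> dfun -> dfun) : Prop :=
  (forall F L, in_Delta_plus F -> in_Delta_plus L -> in_Delta_plus (T F L)) /\
  (forall F L, in_Delta_plus F -> in_Delta_plus L -> T F L = T L F) /\
  (forall F L M, in_Delta_plus F -> in_Delta_plus L -> in_Delta_plus M ->
      T F (T L M) = T (T F L) M) /\
  (forall F F' L, in_Delta_plus F -> in_Delta_plus F' -> in_Delta_plus L ->
      dle F F' -> dle (T F L) (T F' L)) /\
  (forall F, in_Delta_plus F -> T F H0 = F).

Definition weak_cv (Fn : nat -> dfun) (F : dfun) : Prop :=
  forall t, continuity_pt F t -> Un_cv (fun n => Fn n t) (F t).

Definition continuous_triangle (T : dfun -> dfun -> dfun) : Prop :=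
  forall (Fn Ln : nat -> dfun) (F L : dfun),
    (forall n, in_Delta_plus (Fn n)) -> (forall n, in_Delta_plus (Ln n)) ->
    in_Delta_plus F -> in_Delta_plus L ->
    weak_cv Fn F -> weak_cv Ln L ->
    weak_cv (fun n => T (Fn n) (Ln n)) (T F L).

Definition PM_space (G : Type) (D : G -> G -> dfun) (T : dfun -> dfun -> dfun) : Prop :=
  triangle_function T /\
  (forall p q, in_Delta_plus (D p q)) /\
  (forall p q, D p q = H0 <-> p = q) /\
  (forall p q, D p q = D q p) /\
  (forall p q r, dle (T (D p q) (D q r)) (D p r)).

Definition PM_Cauchy {G : Type} (D : G -> G -> dfun) (z : nat -> G) : Prop :=
  forall t eps, 0 < eps -> exists N : nat, forall n p : nat, (N <= n)%nat -> (N <= p)%nat ->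
    Rabs (D (z n) (z p) t - H0 t) < eps.

Definition prob_1_Lipschitz {G : Type} (D : G -> G -> dfun) (T : dfun -> dfun -> dfun)
  (f : G -> dfun) : Prop :=
  forall x y, dle (T (D x y) (f y)) (f x).

(* Main.v *)
Require Import Defs.
From Stdlib Require Import Reals Lra Lia Classical.
Open Scope R_scope.

Lemma cont_intro (f : R -> R) x :
  (forall eps, 0 < eps -> exists d, 0 < d /\ forall y, Rabs (y - x) < d -> Rabs (f y - f x) < eps) ->
  continuity_pt f x.
Proof.
  intros H eps He. destruct (H eps He) as [d [Hd Hy]]. exists d; split; [lra|].
  intros y [_ Hyd]. simpl in *. unfold R_dist in *. apply Hy; auto.
Qed.

Lemma cont_elim (f : R -> R) x : continuity_pt f x ->
  forall eps, 0 < eps -> exists d, 0 < d /\ forall y, Rabs (y - x) < d -> Rabs (f y - f x) < eps.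
Proof.
  intros H eps He. destruct (H eps He) as [d [Hd Hy]]. exists d; split; [lra|].
  intros y Hyd. destruct (Req_dec y x) as [->|Hne].
  - rewrite Rminus_diag, Rabs_R0; auto.
  - apply (Hy y). split; [split; [exact I| auto] | exact Hyd].
Qed.

Lemma dp_nonpos F : in_Delta_plus F -> forall t, t <= 0 -> F t = 0.
Proof.
  intros [Hm [_ [Hb H0']]] t Ht. pose proof (Hm _ _ Ht). pose proof (Hb t). lra.
Qed.

Definition step (t0 c : R) : dfun := fun s => if Rle_dec s t0 then 0 else c.

Lemma step_dp t0 c : 0 <= t0 -> 0 <= c <= 1 -> in_Delta_plus (step t0 c).
Proof.
  intros Ht Hc. unfold in_Delta_plus, step. repeat split.
  - intros s u Hsu. destruct (Rle_dec s t0); destruct (Rle_dec u t0); lra.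
  - intros t eps He. destruct (Rle_dec t t0).
    + exists 1. split; [lra|]. intros s Hs. destruct (Rle_dec s t0); [|lra].
      rewrite Rminus_diag, Rabs_R0; lra.
    + exists (t - t0). split; [lra|]. intros s Hs. destruct (Rle_dec s t0); [lra|].
      rewrite Rminus_diag, Rabs_R0; lra.
  - destruct (Rle_dec t t0); lra.
  - destruct (Rle_dec t t0); lra.
  - destruct (Rle_dec 0 t0); lra.
Qed.

Lemma step_cont t0 c t : t0 < t -> continuity_pt (step t0 c) t.
Proof.
  intros Ht. apply cont_intro. intros eps He. exists (t - t0). split; [lra|].
  intros y Hy. unfold step. apply Rabs_def2 in Hy.
  destruct (Rle_dec y t0); [lra|]. destruct (Rle_dec t t0); [lra|].
  rewrite Rminus_diag, Rabs_R0; lra.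
Qed.

Lemma step_le F t0 c : in_Delta_plus F -> c <= F t0 -> dle (step t0 c) F.
Proof.
  intros [Hm [_ [Hb _]]] Hc s. unfold step. destruct (Rle_dec s t0).
  - apply Hb.
  - pose proof (Hm t0 s ltac:(lra)). lra.
Qed.

Definition Gk (k : nat) : dfun := step (/ (INR k + 1)) (1 - / (INR k + 1)).

Lemma delta_pos k : 0 < / (INR k + 1).
Proof. apply Rinv_0_lt_compat. pose proof (pos_INR k). lra. Qed.

Lemma delta_le1 k : / (INR k + 1) <= 1.
Proof.
  pose proof (pos_INR k). rewrite <- Rinv_1. apply Rinv_le_contravar; lra.
Qed.

Lemma Gk_dp k : in_Delta_plus (Gk k).
Proof.
  pose proof (delta_pos k); pose proof (delta_le1 k).
  apply step_dp; lra.
Qed.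

Lemma delta_small eps : 0 < eps -> exists N, forall k, (N <= k)%nat -> / (INR k + 1) < eps.
Proof.
  intros He. destruct (INR_archimed eps 1 He) as [N HN]. exists N. intros k Hk.
  apply le_INR in Hk. pose proof (pos_INR N).
  apply (Rmult_lt_reg_r (INR k + 1)); [lra|]. rewrite Rinv_l by lra. nra.
Qed.

Lemma Gk_cv : weak_cv Gk H0.
Proof.
  intros t Hct eps He. unfold Gk, step, H0, R_dist. destruct (Rle_dec t 0) as [Ht0|Ht0].
  - exists 0%nat. intros n _. destruct (Rle_dec t (/ (INR n + 1))).
    + rewrite Rminus_diag, Rabs_R0; lra.
    + pose proof (delta_pos n); lra.
  - destruct (delta_small (Rmin t eps)) as [N HN]. { apply Rmin_pos; lra. }
    exists N. intros n Hn. specialize (HN n Hn).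
    pose proof (Rmin_l t eps); pose proof (Rmin_r t eps). pose proof (delta_pos n).
    destruct (Rle_dec t (/ (INR n + 1))); [lra|].
    rewrite Rabs_left1; lra.
Qed.

Lemma T_mono T F F' L L' : triangle_function T ->
  in_Delta_plus F -> in_Delta_plus F' -> in_Delta_plus L -> in_Delta_plus L' ->
  dle F F' -> dle L L' -> dle (T F L) (T F' L').
Proof.
  intros [Hd [Hc [_ [Hm _]]]] HF HF' HL HL' H1 H2 t.
  eapply Rle_trans. apply (Hm F F' L HF HF' HL H1).
  rewrite (Hc F' L HF' HL), (Hc F' L' HF' HL'). apply (Hm L L' F' HL HL' HF' H2).
Qed.

Lemma const_cv (S : dfun) : weak_cv (fun _ => S) S.
Proof. intros t _ eps He. exists 0%nat. intros. unfold R_dist. rewrite Rminus_diag, Rabs_R0; lra. Qed.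

Lemma keyK T (Hcont : continuous_triangle T) (HT : triangle_function T)
  (Dn : nat -> dfun) (HD : forall n, in_Delta_plus (Dn n))
  (Hk : forall k, exists N, forall m n, (N <= m)%nat -> (N <= n)%nat -> dle (T (Gk k) (Dn n)) (Dn m))
  t0 t c : 0 <= t0 -> t0 < t -> 0 <= c <= 1 ->
  (forall N, exists n, (N <= n)%nat /\ c <= Dn n t0) ->
  forall eps, 0 < eps -> exists N, forall m, (N <= m)%nat -> c - eps < Dn m t.
Proof.
  intros Ht0 Htt Hc Hfr eps He.
  set (S := step t0 c). assert (HS : in_Delta_plus S) by (apply step_dp; lra).
  pose proof (Hcont Gk (fun _ => S) H0 S Gk_dp (fun _ => HS)) as Hc1.
  assert (HH0 : in_Delta_plus H0).
  { replace H0 with (step 0 1). apply step_dp; lra. reflexivity. }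
  specialize (Hc1 HH0 HS Gk_cv (const_cv S)).
  pose proof HT as [Hd [Hcm [Ha [Hm Hid]]]].
  rewrite (Hcm H0 S HH0 HS), (Hid S HS) in Hc1.
  destruct (Hc1 t (step_cont t0 c t Htt) eps He) as [k Hkk].
  specialize (Hkk k (Nat.le_refl k)). unfold R_dist in Hkk.
  assert (ESt : S t = c). { unfold S, step. destruct (Rle_dec t t0); lra. }
  rewrite ESt in Hkk. apply Rabs_def2 in Hkk.
  destruct (Hk k) as [N HN]. destruct (Hfr N) as [n [Hn Hcn]].
  exists N. intros m Hm'.
  pose proof (HN m n Hm' Hn t).
  assert (H1 : dle (T (Gk k) S) (T (Gk k) (Dn n))).
  { apply T_mono; [exact HT|apply Gk_dp|apply Gk_dp|exact HS|apply HD|intro; lra|apply step_le; auto]. }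
  specialize (H1 t). lra.
Qed.

Definition Aset (Dn : nat -> dfun) (t c : R) : Prop :=
  c <= 1 /\ (c <= 0 \/ exists s, s < t /\ exists N, forall n, (N <= n)%nat -> c <= Dn n s).

Lemma Aset_bound Dn t : bound (Aset Dn t).
Proof. exists 1. intros c [H _]. exact H. Qed.

Lemma Aset_ne Dn t : exists c, Aset Dn t c.
Proof. exists 0. split; [lra| left; lra]. Qed.

Definition limf (Dn : nat -> dfun) : dfun := fun t =>
  proj1_sig (completeness (Aset Dn t) (Aset_bound Dn t) (Aset_ne Dn t)).

Lemma limf_lub Dn t : is_lub (Aset Dn t) (limf Dn t).
Proof. unfold limf. destruct (completeness _ _ _) as [m Hm]. exact Hm. Qed.

Lemma lim_ub Dn t c : Aset Dn t c -> c <= limf Dn t.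
Proof. intros H. apply (proj1 (limf_lub Dn t)). exact H. Qed.

Lemma lim_least Dn t M : (forall c, Aset Dn t c -> c <= M) -> limf Dn t <= M.
Proof. intros H. apply (proj2 (limf_lub Dn t)). exact H. Qed.

Lemma lim_approx Dn t eps : 0 < eps -> exists c, Aset Dn t c /\ limf Dn t - eps < c.
Proof.
  intros He. apply NNPP. intros Hn.
  assert (limf Dn t <= limf Dn t - eps); [|lra].
  apply lim_least. intros c Hc. apply Rnot_lt_le. intros Hlt. apply Hn. exists c; auto.
Qed.

Lemma lim_bounds Dn t : 0 <= limf Dn t <= 1.
Proof.
  split. apply lim_ub. split; [lra|left; lra].
  apply lim_least. intros c [H _]; exact H.
Qed.

Lemma lim_mono Dn : nondecreasing (limf Dn).
Proof.
  intros s t Hst. apply lim_least. intros c [H1 [H2|[u [Hu HN]]]].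
  - apply lim_ub. split; auto.
  - apply lim_ub. split; auto. right. exists u. split; [lra|auto].
Qed.

Lemma lim_lower Dn (HD : forall n, in_Delta_plus (Dn n)) t eps : 0 < eps ->
  exists N, forall n, (N <= n)%nat -> limf Dn t - eps < Dn n t.
Proof.
  intros He. destruct (lim_approx Dn t eps He) as [c [[_ [Hc|[s [Hs [N HN]]]]] Hlt]].
  - exists 0%nat. intros n _. destruct (HD n) as [_ [_ [Hb _]]]. specialize (Hb t). lra.
  - exists N. intros n Hn. specialize (HN n Hn). destruct (HD n) as [Hm _].
    pose proof (Hm s t ltac:(lra)). lra.
Qed.

Lemma lim_dp Dn (HD : forall n, in_Delta_plus (Dn n)) : in_Delta_plus (limf Dn).
Proof.
  split; [apply lim_mono|]. split; [|split; [apply lim_bounds|]].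
  - intros t eps He. destruct (lim_approx Dn t eps He) as [c [[Hc1 Hc] Hlt]].
    destruct Hc as [Hc|[s [Hs HN]]].
    + exists 1. split; [lra|]. intros s Hs. pose proof (lim_mono Dn s t ltac:(lra)).
      pose proof (lim_bounds Dn s). rewrite Rabs_left1; lra.
    + exists (t - s). split; [lra|]. intros u Hu.
      pose proof (lim_mono Dn u t ltac:(lra)).
      assert (c <= limf Dn u). { apply lim_ub. split; auto. right. exists s. split; [lra|auto]. }
      rewrite Rabs_left1; lra.
  - apply Rle_antisym; [|apply lim_bounds]. apply lim_least.
    intros c [_ [Hc|[s [Hs [N HN]]]]]; [auto|].
    specialize (HN N (Nat.le_refl N)). rewrite (dp_nonpos _ (HD N) s) in HN; lra.
Qed.

Definition Kprop (Dn : nat -> dfun) : Prop :=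
  forall t0 t c, 0 <= t0 -> t0 < t -> 0 <= c <= 1 ->
  (forall N, exists n, (N <= n)%nat /\ c <= Dn n t0) ->
  forall eps, 0 < eps -> exists N, forall m, (N <= m)%nat -> c - eps < Dn m t.

Lemma lim_cv Dn (HD : forall n, in_Delta_plus (Dn n)) (HK : Kprop Dn) : weak_cv Dn (limf Dn).
Proof.
  intros t Hct eps He. set (F := limf Dn).
  destruct (lim_lower Dn HD t eps He) as [N1 HN1].
  assert (Hup : exists N, forall n, (N <= n)%nat -> Dn n t < F t + eps).
  { apply NNPP. intros Hn.
    assert (Hfr : forall N, exists n, (N <= n)%nat /\ F t + eps <= Dn n t).
    { intros N. apply NNPP. intros Hn2. apply Hn. exists N. intros n Hn'.
      apply Rnot_le_lt. intros Hle. apply Hn2. exists n; auto. }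
    pose proof (lim_bounds Dn t) as Hb. fold F in Hb.
    destruct (Rle_dec t 0) as [Ht|Ht].
    { destruct (Hfr 0%nat) as [n [_ Hn']]. rewrite (dp_nonpos _ (HD n) t Ht) in Hn'. lra. }
    destruct (Rle_dec (F t + eps) 1) as [Hc1|Hc1].
    2:{ destruct (Hfr 0%nat) as [n [_ Hn']]. destruct (HD n) as [_ [_ [Hb' _]]].
        specialize (Hb' t). lra. }
    destruct (cont_elim F t Hct (eps/2) ltac:(lra)) as [d [Hd Hdy]].
    destruct (HK t (t + d/4) (F t + eps) ltac:(lra) ltac:(lra) ltac:(lra) Hfr (eps/4) ltac:(lra))
      as [N HN].
    assert (F t + eps - eps/4 <= F (t + d/2)).
    { apply lim_ub. split; [lra|]. right. exists (t + d/4). split; [lra|]. exists N.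
      intros n Hn'. specialize (HN n Hn'). lra. }
    specialize (Hdy (t + d/2)). rewrite Rabs_right in Hdy by lra.
    specialize (Hdy ltac:(lra)). apply Rabs_def2 in Hdy. lra. }
  destruct Hup as [N2 HN2]. exists (max N1 N2). intros n Hn.
  specialize (HN1 n ltac:(lia)). specialize (HN2 n ltac:(lia)).
  unfold R_dist. apply Rabs_def1; fold F in HN1 |- *; lra.
Qed.

Definition bis (g : R -> R) (ab : R * R) : R * R :=
  let x := fst ab in let y := snd ab in let m := (x + y) / 2 in
  if Rle_dec (g m - g x) (g y - g m) then ((3 * x + m) / 4, (x + 3 * m) / 4)
  else ((3 * m + y) / 4, (m + 3 * y) / 4).

Fixpoint sab (g : R -> R) (ab : R * R) (k : nat) : R * R :=
  match k with O => ab | S k => bis g (sab g ab k) end.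

Lemma bis_spec g (Hg : nondecreasing g) x y : x < y ->
  x < fst (bis g (x, y)) < snd (bis g (x, y)) /\ snd (bis g (x, y)) < y /\
  g (snd (bis g (x, y))) - g (fst (bis g (x, y))) <= (g y - g x) / 2.
Proof.
  intros Hxy. unfold bis; simpl. destruct (Rle_dec _ _) as [H|H]; simpl.
  - split; [lra|split;[lra|]].
    pose proof (Hg x ((3 * x + (x + y) / 2) / 4) ltac:(lra)).
    pose proof (Hg ((x + 3 * ((x + y) / 2)) / 4) ((x+y)/2) ltac:(lra)). lra.
  - split; [lra|split;[lra|]].
    pose proof (Hg ((x+y)/2) ((3 * ((x + y) / 2) + y) / 4) ltac:(lra)).
    pose proof (Hg ((((x + y) / 2) + 3 * y) / 4) y ltac:(lra)). lra.
Qed.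

Lemma sab_spec g (Hg : nondecreasing g) a b : a < b -> forall k,
  fst (sab g (a,b) k) < snd (sab g (a,b) k) /\
  fst (sab g (a,b) k) < fst (sab g (a,b) (S k)) /\
  snd (sab g (a,b) (S k)) < snd (sab g (a,b) k) /\
  g (snd (sab g (a,b) k)) - g (fst (sab g (a,b) k)) <= (g b - g a) / 2 ^ k.
Proof.
  intros Hab. induction k as [|k IH].
  - simpl. destruct (bis_spec g Hg a b Hab) as [H1 [H2 H3]]. split; [lra|]. split; [lra|].
    split; [lra|]. lra.
  - destruct IH as [I1 [I2 [I3 I4]]].
    change (sab g (a,b) (S k)) with (bis g (sab g (a,b) k)) in *.
    change (sab g (a,b) (S (S k))) with (bis g (bis g (sab g (a,b) k))).
    destruct (sab g (a,b) k) as [x y]. simpl fst in *. simpl snd in *.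
    destruct (bis_spec g Hg x y I1) as [H1 [H2 H3]].
    destruct (bis g (x,y)) as [x' y'] eqn:E. simpl fst in *; simpl snd in *.
    assert (Hx'y' : x' < y') by lra.
    destruct (bis_spec g Hg x' y' Hx'y') as [J1 [J2 J3]].
    split; [lra|]. split; [lra|]. split; [lra|].
    simpl pow. assert (0 < 2 ^ k) by (apply pow_lt; lra).
    apply (Rle_trans _ _ _ H3). unfold Rdiv. rewrite Rinv_mult. 
    apply (Rmult_le_reg_l 2); [lra|]. field_simplify; [|lra]. unfold Rdiv in I4. lra.
Qed.

Lemma pow2_ge k : INR k + 1 <= 2 ^ k.
Proof.
  induction k as [|k IH]; [simpl; lra|]. rewrite S_INR; simpl.
  pose proof (pos_INR k). lra.
Qed.

Lemma dense_cont (g : R -> R) (Hg : nondecreasing g) a b : a < b ->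
  exists p, a < p < b /\ continuity_pt g p.
Proof.
  intros Hab. pose proof (sab_spec g Hg a b Hab) as Sp.
  set (A k := fst (sab g (a,b) k)). set (B k := snd (sab g (a,b) k)).
  assert (MA : forall k j, A k <= A (k + j)%nat).
  { intros k j. induction j as [|j IH]. rewrite Nat.add_0_r; lra.
    rewrite Nat.add_succ_r. pose proof (Sp (k + j)%nat). unfold A in *. lra. }
  assert (MB : forall k j, B (k + j)%nat <= B k).
  { intros k j. induction j as [|j IH]. rewrite Nat.add_0_r; lra.
    rewrite Nat.add_succ_r. pose proof (Sp (k + j)%nat). unfold B in *. lra. }
  assert (AB : forall k j, A k <= B j).
  { intros k j. pose proof (MA k j) as H0. pose proof (MB j k) as H1.
    pose proof (Sp (k + j)%nat) as [Hq _]. fold (A (k+j)%nat) (B (k+j)%nat) in Hq.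
    rewrite (Nat.add_comm j k) in H1. lra. }
  set (E x := exists k, x = A k).
  assert (Eb : bound E). { exists (B 0%nat). intros x [k ->]. apply AB. }
  assert (Ene : exists x, E x). { exists (A 0%nat). exists 0%nat. auto. }
  destruct (completeness E Eb Ene) as [p [Hp1 Hp2]].
  assert (Pk : forall k, A k < p < B k).
  { intros k. pose proof (Sp k) as [_ [H1 [H2 _]]]. fold (A k) (B k) in H1, H2.
    change (fst (sab g (a, b) (S k))) with (A (S k)) in H1.
    change (snd (sab g (a, b) (S k))) with (B (S k)) in H2.
    split.
    - assert (A (S k) <= p) by (apply Hp1; exists (S k); auto). lra.
    - assert (p <= B (S k)). { apply Hp2. intros x [j ->]. apply AB. } lra. }
  exists p. split.
  { pose proof (Pk 0%nat). unfold A, B in H; simpl in H. lra. }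
  apply cont_intro. intros eps He.
  set (M := g b - g a). assert (HM : 0 <= M) by (unfold M; pose proof (Hg a b ltac:(lra)); lra).
  destruct (delta_small (eps / (M + 1))) as [k Hk].
  { apply Rdiv_lt_0_compat; lra. }
  specialize (Hk k (Nat.le_refl k)).
  pose proof (Sp k) as [_ [_ [_ Hv]]]. fold (A k) (B k) in Hv. fold M in Hv.
  assert (Hsm : M / 2 ^ k < eps).
  { pose proof (pow2_ge k). pose proof (pos_INR k).
    assert (M / 2 ^ k <= M * / (INR k + 1)).
    { unfold Rdiv. apply Rmult_le_compat_l; auto. apply Rinv_le_contravar; lra. }
    assert (M * / (INR k + 1) <= M * (eps / (M + 1))) by (apply Rmult_le_compat_l; lra).
    assert (M * (eps / (M + 1)) < eps).
    { unfold Rdiv. apply (Rmult_lt_reg_r (M+1)); [lra|].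
      rewrite Rmult_assoc, Rmult_assoc, Rinv_l by lra. nra. }
    lra. }
  pose proof (Pk k) as Pk'.
  exists (Rmin (p - A k) (B k - p)). split. { apply Rmin_pos; lra. }
  intros y Hy. pose proof (Rmin_l (p - A k) (B k - p)). pose proof (Rmin_r (p - A k) (B k - p)).
  apply Rabs_def2 in Hy.
  pose proof (Hg (A k) y ltac:(lra)). pose proof (Hg y (B k) ltac:(lra)).
  pose proof (Hg (A k) p ltac:(lra)). pose proof (Hg p (B k) ltac:(lra)).
  apply Rabs_def1; lra.
Qed.

Lemma cont_of_sum (g1 g2 : R -> R) p : nondecreasing g1 -> nondecreasing g2 ->
  continuity_pt (fun t => g1 t + g2 t) p -> continuity_pt g1 p.
Proof.
  intros H1 H2 Hc. pose proof (cont_elim _ _ Hc) as Hc'.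
  apply cont_intro; intros eps He; destruct (Hc' eps He) as [d [Hd Hy]].
  exists d; split; auto; intros y Hyd; specialize (Hy y Hyd).
  apply Rabs_def2 in Hy; apply Rabs_def1.
  - destruct (Rle_dec y p) as [Hyp|Hyp].
    + pose proof (H1 y p Hyp). lra.
    + pose proof (H1 p y ltac:(lra)); pose proof (H2 p y ltac:(lra)). lra.
  - destruct (Rle_dec y p) as [Hyp|Hyp].
    + pose proof (H1 y p Hyp); pose proof (H2 y p Hyp). lra.
    + pose proof (H1 p y ltac:(lra)). lra.
Qed.

Lemma dense_cont2 (g1 g2 : R -> R) : nondecreasing g1 -> nondecreasing g2 -> forall a b, a < b ->
  exists p, a < p < b /\ continuity_pt g1 p /\ continuity_pt g2 p.
Proof.
  intros H1 H2 a b Hab.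
  destruct (dense_cont (fun t => g1 t + g2 t)) with a b as [p [Hp Hc]]; auto.
  { intros s t Hst. pose proof (H1 s t Hst); pose proof (H2 s t Hst). lra. }
  exists p. split; auto. split.
  - exact (cont_of_sum g1 g2 p H1 H2 Hc).
  - apply (cont_of_sum g2 g1 p H2 H1). apply cont_intro. intros eps He. destruct (cont_elim _ _ Hc eps He) as [d [Hd Hy]].
    exists d. split; auto. intros y Hyd. specialize (Hy y Hyd).
    replace (g2 y + g1 y - (g2 p + g1 p)) with (g1 y + g2 y - (g1 p + g2 p)) by ring. exact Hy.
Qed.

Theorem mainTheorem9 (G : Type) (D : G -> G -> dfun) (T : dfun -> dfun -> dfun)
  (HPM : PM_space G D T) (Hcont : continuous_triangle T)
  (a : nat -> G) (Ha : PM_Cauchy D a) :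
  exists f : G -> dfun,
    (forall x, in_Delta_plus (f x)) /\
    prob_1_Lipschitz D T f /\
    (forall x, weak_cv (fun n => D (a n) x) (f x)) /\
    weak_cv (fun n => f (a n)) H0.
Proof.
  destruct HPM as [HT [HDp [HDeq [HDs HDtr]]]].
  pose proof HT as [Td [Tc [Ta [Tm Tid]]]].
  exists (fun x => limf (fun n => D (a n) x)).
  assert (HK : forall x, Kprop (fun n => D (a n) x)).
  { intros x. unfold Kprop. apply (keyK T); auto.
    intros k. set (d := / (INR k + 1)). pose proof (delta_pos k) as Hd. fold d in Hd. assert (Gd : Gk k = step d (1 - d)) by reflexivity. clearbody d.
    destruct (Ha d d Hd) as [N HN]. exists N. intros m n Hm Hn.
    specialize (HN m n Hm Hn). unfold H0 in HN. destruct (Rle_dec d 0); [lra|].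
    apply Rabs_def2 in HN.
    assert (Hg : dle (Gk k) (D (a m) (a n))). { rewrite Gd. apply step_le; auto. lra. }
    intro t. eapply Rle_trans; [|apply HDtr].
    apply (T_mono T); [exact HT|apply Gk_dp|auto|auto|auto|exact Hg|intro; lra]. }
  assert (Hcv : forall x, weak_cv (fun n => D (a n) x) (limf (fun n => D (a n) x))).
  { intros x. apply lim_cv; auto. }
  assert (Hdp : forall x, in_Delta_plus (limf (fun n => D (a n) x))).
  { intros x. apply lim_dp; auto. }
  split; [exact Hdp|]. split; [|split; [exact Hcv|]].
  - intros x y t. set (fx := limf (fun n => D (a n) x)). set (fy := limf (fun n => D (a n) y)).
    set (H := T (D x y) fy).
    assert (HH : in_Delta_plus H) by (apply Td; [apply HDp|apply Hdp]).
    assert (Hp : forall p, continuity_pt H p -> continuity_pt fx p -> H p <= fx p).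
    { intros p Hc1 Hc2.
      pose proof (Hcont (fun n => D (a n) y) (fun _ => D y x) fy (D y x)
        (fun n => HDp _ _) (fun _ => HDp _ _) (Hdp y) (HDp y x) (Hcv y) (const_cv _)) as Hc.
      assert (E : T fy (D y x) = H). { unfold H. rewrite (Tc fy (D y x) (Hdp y) (HDp y x)). rewrite HDs. reflexivity. }
      rewrite E in Hc.
      apply Rle_cv_lim with (Un := fun n => T (D (a n) y) (D y x) p) (Vn := fun n => D (a n) x p).
      - intros n. exact (HDtr (a n) y x p).
      - apply Hc; auto.
      - apply Hcv; auto. }
    apply Rnot_lt_le. intros Hlt.
    destruct HH as [_ [Hlc _]].
    destruct (Hlc t (H t - fx t) ltac:(lra)) as [d [Hd Hs]].
    destruct (dense_cont2 H fx (proj1 (Td _ _ (HDp x y) (Hdp y))) (proj1 (Hdp x)) (t - d) t ltac:(lra))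
      as [p [Hpt [Hc1 Hc2]]].
    specialize (Hs p Hpt). specialize (Hp p Hc1 Hc2).
    pose proof (proj1 (Hdp x) p t ltac:(lra)) as H1. fold fx in H1.
    apply Rabs_def2 in Hs. lra.
  - intros t _ eps He. unfold R_dist. destruct (Rle_dec t 0) as [Ht|Ht].
    + exists 0%nat. intros n _. rewrite (dp_nonpos _ (Hdp (a n)) t Ht).
      unfold H0. destruct (Rle_dec t 0); [|lra]. rewrite Rminus_diag, Rabs_R0; lra.
    + destruct (Ha (t/2) (eps/2) ltac:(lra)) as [N HN]. exists N. intros n Hn.
      assert (Hl : 1 - eps/2 <= limf (fun m => D (a m) (a n)) t).
      { apply lim_ub. split; [lra|]. right. exists (t/2). split; [lra|]. exists N.
        intros m Hm. specialize (HN m n Hm Hn). unfold H0 in HN.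
        destruct (Rle_dec (t/2) 0); [lra|]. apply Rabs_def2 in HN. lra. }
      pose proof (lim_bounds (fun m => D (a m) (a n)) t).
      unfold H0. destruct (Rle_dec t 0); [lra|]. apply Rabs_def1; lra.
Qed.
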